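(* Let $\Sigma\subseteq\Delta\subseteq\mathcal L_{\Diamond\forall}$ with $\Sigma$ finite and both closed under subformulas. Let $\mathfrak W=(W,\preccurlyeq_W,\ell_W)$ be a finite $\Sigma$-labelled frame and $\mathfrak X=(X,\preccurlyeq_X,\ell_X)$ a $\Delta$-labelled frame, and let $w\in W$, $x\in X$. Then: (1) if $\mathrm{Sim}(w)\in\ell_X^-(x)$, then there is $y\succcurlyeq_X x$ such that $(\mathfrak W,w)\rightharpoonup(\mathfrak X,y)$; (2) if there is $y\succcurlyeq_X x$ such that $(\mathfrak W,w)\rightharpoonup(\mathfrak X,y)$, then $\mathrm{Sim}(w)\notin\ell_X^+(x)$.
   Context: $\mathcal L_{\Diamond\forall}$: formulas $\varphi::=\bot\mid p\mid\varphi\wedge\varphi\mid\varphi\vee\varphi\mid\varphi\to\varphi\mid\circ\varphi\mid\Diamond\varphi\mid\forall\varphi$, $p$ ranging over propositional variables; $\top:=\bot\to\bot$, $\bigwedge\varnothing=\top$, $\bigvee\varnothing=\bot$. For $\Sigma$ closed under subformulas, a (two-sided) $\Sigma$-type is a pair $\Phi=(\Phi^+,\Phi^-)$ of finite subsets of $\Sigma$ such that: (1) $\Phi^-\cap\Phi^+=\varnothing$; (2) $\bot\notin\Phi^+$; (3) $\varphi\wedge\psi\in\Phi^+\Rightarrow\varphi,\psi\in\Phi^+$; (4) $\varphi\wedge\psi\in\Phi^-\Rightarrow\varphi\in\Phi^-$ or $\psi\in\Phi^-$; (5) $\varphi\vee\psi\in\Phi^+\Rightarrow\varphi\in\Phi^+$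 or $\psi\in\Phi^+$; (6) $\varphi\vee\psi\in\Phi^-\Rightarrow\varphi,\psi\in\Phi^-$; (7) $\varphi\to\psi\in\Phi^+\Rightarrow\varphi\in\Phi^-$ or $\psi\in\Phi^+$; (8) $\varphi\to\psi\in\Phi^-\Rightarrow\psi\in\Phi^-$; (9) $\Diamond\varphi\in\Phi^-\Rightarrow\varphi\in\Phi^-$. Write $\Phi\preccurlyeq_T\Psi$ if $\Phi^+\subseteq\Psi^+$ and $\Psi^-\subseteq\Phi^-$, and $\Phi\subseteq_T\Psi$ if $\Phi^+\subseteq\Psi^+$ and $\Phi^-\subseteq\Psi^-$. A $\Sigma$-labelled frame is $(W,\preccurlyeq,\ell)$ with $\preccurlyeq$ a partial order on $W$ and $\ell$ mapping each $w$ to a $\Sigma$-type $\ell(w)=(\ell^+(w),\ell^-(w))$ such that $w\preccurlyeq v$ implies $\ell(w)\preccurlyeq_T\ell(v)$, and whenever $\varphi\to\psi\in\ell^-(w)$ there is $v\succcurlyeq w$ with $\varphi\in\ell^+(v)$ and $\psi\in\ell^-(v)$. A simulation from a $\Sigma$-labelled frame $\mathfrak W$ to a $\Delta$-labelled frame $\mathfrak X$ is a relation $E\subseteq W\times X$ that is forward confluent (if $w\mathrel E y$ and $w\preccurlyeq w'$ then there is $y'\succcurlyeq y$ with $w'\mathrel E y'$) and such that $w\mathrel Ey$ implies $\ell_W(w)\subseteq_T\ell_X(y)$; $(\mathfrak W,w)\rightharpoonup(\mathfrak X,y)$ means some simulation $E$ has $w\mathrel Ey$. For finite $\mathfrak W$,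 $\mathrm{Sim}(w)$ is defined by backward induction on $\preccurlyeq_W$: $\mathrm{Sim}(w)=\bigwedge\ell_W^+(w)\to\bigvee\ell_W^-(w)\vee\bigvee_{v\succ w}\mathrm{Sim}(v)$, where $v\succ w$ means $w\preccurlyeq v$ and $v\neq w$. *)

(* Defs.v *)
From mathcomp Require Import all_boot.
From Stdlib Require List.
Set Implicit Arguments. Unset Strict Implicit. Unset Printing Implicit Defensive.

Inductive formula : Type :=
  | Bot : formula
  | Var : nat -> formula
  | And : formula -> formula -> formula
  | Or  : formula -> formula -> formula
  | Imp : formula -> formula -> formula
  | Next : formula -> formula
  | Dia : formula -> formula
  | All : formula -> formula.

Definition Top : formula := Imp Bot Bot.

Fixpoint bigwedge (s : seq formula) : formula :=
  match s with
  | [::] => Top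
  | [:: a] => a
  | a :: s' => And a (bigwedge s')
  end.

Fixpoint bigvee (s : seq formula) : formula :=
  match s with
  | [::] => Bot
  | [:: a] => a
  | a :: s' => Or a (bigvee s')
  end.

Definition subformula_closed (S : formula -> Prop) : Prop :=
  forall f, S f ->
    match f with
    | And a b | Or a b | Imp a b => S a /\ S b
    | Next a | Dia a | All a => S a
    | _ => True
    end.

Definition finite_fset (S : formula -> Prop) : Prop :=
  exists l : seq formula, forall f, S f <-> List.In f l.

(* A two-sided type: finite subsets (given as lists) (Phi+, Phi-) of S. *)
Definition ftype := (seq formula * seq formula)%type.

Definition is_type (S : formula -> Prop) (P : ftype) : Prop :=
  let (pos, neg) := P in
  (forall f, List.In f pos -> S f) /\
  (forall f, List.In f neg -> S f) /\
  (forall f, List.In f neg -> List.In f pos -> False) /\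
  ~ List.In Bot pos /\
  (forall a b, List.In (And a b) pos -> List.In a pos /\ List.In b pos) /\
  (forall a b, List.In (And a b) neg -> List.In a neg \/ List.In b neg) /\
  (forall a b, List.In (Or a b) pos -> List.In a pos \/ List.In b pos) /\
  (forall a b, List.In (Or a b) neg -> List.In a neg /\ List.In b neg) /\
  (forall a b, List.In (Imp a b) pos -> List.In a neg \/ List.In b pos) /\
  (forall a b, List.In (Imp a b) neg -> List.In b neg) /\
  (forall a, List.In (Dia a) neg -> List.In a neg).

Definition type_le (P Q : ftype) : Prop :=
  (forall f, List.In f P.1 -> List.In f Q.1) /\
  (forall f, List.In f Q.2 -> List.In f P.2).

Definition type_sub (P Q : ftype) : Prop :=
  (forall f, List.In f P.1 -> List.In f Q.1) /\
  (forall f, List.In f P.2 -> List.In f Q.2).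

Definition partial_order (T : Type) (le : T -> T -> Prop) : Prop :=
  (forall x, le x x) /\
  (forall x y z, le x y -> le y z -> le x z) /\
  (forall x y, le x y -> le y x -> x = y).

Definition labelled_frame (S : formula -> Prop) (T : Type)
    (le : T -> T -> Prop) (lab : T -> ftype) : Prop :=
  partial_order le /\
  (forall w, is_type S (lab w)) /\
  (forall w v, le w v -> type_le (lab w) (lab v)) /\
  (forall w a b, List.In (Imp a b) (lab w).2 ->
     exists v, le w v /\ List.In a (lab v).1 /\ List.In b (lab v).2).

Definition simulation (W X : Type) (leW : W -> W -> Prop) (labW : W -> ftype)
    (leX : X -> X -> Prop) (labX : X -> ftype) (E : W -> X -> Prop) : Prop :=
  (forall w y w', E w y -> leW w w' -> exists y', leX y y' /\ E w' y') /\
  (forall w y, E w y -> type_sub (labW w) (labX y)).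

Definition simulates (W X : Type) (leW : W -> W -> Prop) (labW : W -> ftype)
    (leX : X -> X -> Prop) (labX : X -> ftype) (w : W) (y : X) : Prop :=
  exists E, simulation leW labW leX labX E /\ E w y.

(* Sim(w), by backward induction on a finite poset, implemented with fuel
   #|W| (which exceeds the length of any strict chain). *)
Fixpoint Sim_fuel (W : finType) (leW : rel W) (labW : W -> ftype)
    (n : nat) (w : W) : formula :=
  match n with
  | 0 => Bot
  | n'.+1 =>
      Imp (bigwedge (labW w).1)
          (Or (bigvee (labW w).2)
              (bigvee [seq Sim_fuel leW labW n' v
                      | v <- enum W & leW w v && (v != w)]))
  end.

Definition Sim (W : finType) (leW : rel W) (labW : W -> ftype) (w : W)
  : formula := Sim_fuel leW labW #|W| w.

(* Main.v *)
Require Import Defs.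
From mathcomp Require Import all_boot.
From Stdlib Require List.
Import List (In).
Set Implicit Arguments.


Lemma ty_disj {S P} : is_type S P -> forall f, In f P.2 -> In f P.1 -> False.
Proof. by case: P => p q [_ [_ [H _]]]. Qed.
Lemma ty_bot {S P} : is_type S P -> ~ In Bot P.1.
Proof. by case: P => p q [_ [_ [_ [H _]]]]. Qed.
Lemma ty_andp {S P} : is_type S P -> forall a b, In (And a b) P.1 -> In a P.1 /\ In b P.1.
Proof. by case: P => p q [_ [_ [_ [_ [H _]]]]]. Qed.
Lemma ty_andn {S P} : is_type S P -> forall a b, In (And a b) P.2 -> In a P.2 \/ In b P.2.
Proof. by case: P => p q [_ [_ [_ [_ [_ [H _]]]]]]. Qed.
Lemma ty_orp {S P} : is_type S P -> forall a b, In (Or a b) P.1 -> In a P.1 \/ In b P.1.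
Proof. by case: P => p q [_ [_ [_ [_ [_ [_ [H _]]]]]]]. Qed.
Lemma ty_orn {S P} : is_type S P -> forall a b, In (Or a b) P.2 -> In a P.2 /\ In b P.2.
Proof. by case: P => p q [_ [_ [_ [_ [_ [_ [_ [H _]]]]]]]]. Qed.
Lemma ty_impp {S P} : is_type S P -> forall a b, In (Imp a b) P.1 -> In a P.2 \/ In b P.1.
Proof. by case: P => p q [_ [_ [_ [_ [_ [_ [_ [_ [H _]]]]]]]]]. Qed.

Lemma bigwedge_pos {pos : seq formula}
  (hA : forall a b, In (And a b) pos -> In a pos /\ In b pos) {s} :
  In (bigwedge s) pos -> forall a, In a s -> In a pos.
Proof.
elim: s => [|a s IH] //=. case: s IH => [|b s] IH.
- by move=> H c [<-|[]].
- by move=> /hA [Ha Hs] c [<-|Hc] //; apply: IH.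
Qed.

Lemma bigvee_neg {neg : seq formula}
  (hA : forall a b, In (Or a b) neg -> In a neg /\ In b neg) {s} :
  In (bigvee s) neg -> forall a, In a s -> In a neg.
Proof.
elim: s => [|a s IH] //=. case: s IH => [|b s] IH.
- by move=> H c [<-|[]].
- by move=> /hA [Ha Hs] c [<-|Hc] //; apply: IH.
Qed.

Lemma bigwedge_neg {pos neg : seq formula}
  (hA : forall a b, In (And a b) neg -> In a neg \/ In b neg)
  (hD : forall f, In f neg -> In f pos -> False)
  (hT : ~ In Top neg) {s} :
  (forall a, In a s -> In a pos) -> In (bigwedge s) neg -> False.
Proof.
elim: s => [|a s IH] //=. case: s IH => [|b s] IH.
- by move=> H Hn; apply: (hD a) => //; apply: H; left.
- move=> H /hA [Ha|Hs]; first by apply: (hD a) => //; apply: H; left.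
  by apply: IH => // c Hc; apply: H; right.
Qed.

Lemma bigvee_pos {pos : seq formula}
  (hA : forall a b, In (Or a b) pos -> In a pos \/ In b pos)
  (hB : ~ In Bot pos) {s} :
  In (bigvee s) pos -> exists a, In a s /\ In a pos.
Proof.
elim: s => [|a s IH] //=. case: s IH => [|b s] IH.
- by move=> H; exists a; split => //; left.
- move=> /hA [Ha|Hs]; first by exists a; split => //; left.
  by have [c [Hc Hc']] := IH Hs; exists c; split => //; right.
Qed.

Lemma in_mapfilter (W : eqType) (g : W -> formula) (p : pred W) s f :
  In f [seq g x | x <- s & p x] -> exists x, x \in s /\ p x /\ f = g x.
Proof.
elim: s => [|a s IH] //=. case Hp: (p a) => /=.
- move=> [<-|H]; first by exists a; rewrite inE eqxx.
  by have [x [H1 [H2 H3]]] := IH H; exists x; rewrite inE H1 orbT.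
- move=> H; have [x [H1 [H2 H3]]] := IH H; exists x; rewrite inE H1 orbT; done.
Qed.

Lemma mapfilter_in (W : eqType) (g : W -> formula) (p : pred W) s x :
  x \in s -> p x -> In (g x) [seq g x | x <- s & p x].
Proof.
elim: s => [|a s IH] //=. rewrite inE => /orP [/eqP ->|Hx] Hp.
- by rewrite Hp; left.
- case: (p a) => /=; last by apply: IH.
  by right; apply: IH.
Qed.

Lemma main
  (Sig Del : formula -> Prop)
  (W : finType) (leW : rel W) (labW : W -> ftype)
  (HW : labelled_frame Sig (fun a b => leW a b) labW)
  (X : Type) (leX : X -> X -> Prop) (labX : X -> ftype)
  (HX : labelled_frame Del leX labX) n :
  forall v, #|[pred u | leW v u]| <= n -> forall x,
  (In (Sim_fuel leW labW n v) (labX x).2 ->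
     exists y, leX x y /\ simulates (fun a b => leW a b) labW leX labX v y) /\
  ((exists y, leX x y /\ simulates (fun a b => leW a b) labW leX labX v y) ->
     ~ In (Sim_fuel leW labW n v) (labX x).1).
Proof.
have [[Wrefl [Wtrans Wanti]] _] := HW.
have [_ [HXty [HXmon HXimp]]] := HX.
have [[Xrefl _] _] := HX.
elim: n => [|n IH] v Hcard x.
  have : 0 < #|[pred u | leW v u]| by apply/card_gt0P; exists v; rewrite inE Wrefl.
  by move: Hcard; rewrite leqn0 => /eqP ->.
have Hsucc : forall u, leW v u -> u != v -> #|[pred z | leW u z]| <= n.
  move=> u Hvu Hne; rewrite -ltnS; apply: leq_trans Hcard; apply: proper_card.
  apply/properP; split.
    by apply/subsetP => z; rewrite !inE => Huz; apply: Wtrans Huz.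
  exists v; rewrite !inE //; apply/negP => Huv.
  by move/eqP: Hne; apply; apply: Wanti.
split.
- move=> Hin; simpl in Hin.
  have [y [Hxy [HA HBC]]] := HXimp _ _ _ Hin.
  have [HB HC] := ty_orn (HXty y) _ _ HBC.
  have hp := bigwedge_pos (ty_andp (HXty y)) HA.
  have hn := bigvee_neg (ty_orn (HXty y)) HB.
  have hs := bigvee_neg (ty_orn (HXty y)) HC.
  have Hu : forall u, leW v u -> u != v -> exists y', leX y y' /\
      simulates (fun a b => leW a b) labW leX labX u y'.
    move=> u Hvu Hne; apply: (proj1 (IH u (Hsucc u Hvu Hne) y)).
    apply: hs; apply: (@mapfilter_in _ (Sim_fuel leW labW n) (fun u => leW v u && (u != v))).
      by rewrite mem_enum.
    by rewrite Hvu Hne.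
  exists y; split => //.
  exists (fun a b => (a = v /\ b = y) \/ simulates (fun a b => leW a b) labW leX labX a b).
  split; last by left.
  split.
  + move=> a b a' [[-> ->]|[E [[Efc Elab] Eab]]] Haa'.
    * case: (eqVneq a' v) => [->|Hne]; first by exists y; split => //; left.
      have [y' [H1 H2]] := Hu a' Haa' Hne; exists y'; split => //; by right.
    * have [b' [Hbb' Eb']] := Efc _ _ _ Eab Haa'.
      exists b'; split => //; right; exists E; split => //.
  + move=> a b [[-> ->]|[E [[_ Elab] Eab]]]; last by apply: Elab.
    by split; [apply: hp | apply: hn].
- move=> [y [Hxy [E [[Efc Elab] Evy]]]] Hpos.
  have Hpos' := (proj1 (HXmon x y Hxy)) _ Hpos; simpl in Hpos'.
  have [Hsp Hsn] := Elab v y Evy.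
  case: (ty_impp (HXty y) _ _ Hpos') => [HA|HBC].
  + apply: (bigwedge_neg (ty_andn (HXty y)) (ty_disj (HXty y)) _ Hsp HA).
    move=> HT; have [z [_ [Hz _]]] := HXimp _ _ _ HT.
    exact: (ty_bot (HXty z) Hz).
  + case: (ty_orp (HXty y) _ _ HBC) => [HB|HC].
    * have [b [Hb1 Hb2]] := bigvee_pos (ty_orp (HXty y)) (ty_bot (HXty y)) HB.
      exact: (ty_disj (HXty y) _ (Hsn _ Hb1) Hb2).
    * have [f [Hf1 Hf2]] := bigvee_pos (ty_orp (HXty y)) (ty_bot (HXty y)) HC.
      have [u [_ [/andP [Hvu Hne] Hfu]]] := @in_mapfilter _ (Sim_fuel leW labW n) (fun u => leW v u && (u != v)) _ _ Hf1.
      subst f.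
      have [y' [Hyy' Euy']] := Efc _ _ _ Evy Hvu.
      apply: (proj2 (IH u (Hsucc u Hvu Hne) y)) Hf2.
      exists y'; split => //; exists E; split => //.
Qed.

Theorem proposition6p4
  (Sig Del : formula -> Prop)
  (HSD : forall f, Sig f -> Del f)
  (HSfin : finite_fset Sig)
  (HSclo : subformula_closed Sig)
  (HDclo : subformula_closed Del)
  (W : finType) (leW : rel W) (labW : W -> ftype)
  (HW : labelled_frame Sig (fun a b => leW a b) labW)
  (X : Type) (leX : X -> X -> Prop) (labX : X -> ftype)
  (HX : labelled_frame Del leX labX)
  (w : W) (x : X) :
  (List.In (Sim leW labW w) (labX x).2 ->
     exists y, leX x y /\ simulates (fun a b => leW a b) labW leX labX w y) /\
  ((exists y, leX x y /\ simulates (fun a b => leW a b) labW leX labX w y) ->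
     ~ List.In (Sim leW labW w) (labX x).1).
Proof.
have := @main Sig Del W leW labW HW X leX labX HX #|W| w (max_card _) x.
exact.
Qed.
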